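(* Let $d\ge1$, $k\ge2$, and let $G=(V,D)$ be an $\mathcal{R}_d$-connected $k$-fold $\mathcal{R}_d$-circuit whose set of technicolour vertices is $X=\{u,v\}$. (i) If $uv\in D$, then $G$ is the graphical parallel connection of $k$ $\mathcal{R}_d$-circuits along $uv$. (ii) If $uv\notin D$, then $G$ is obtained from the graphical parallel connection of $k+1$ $\mathcal{R}_d$-circuits along $uv$ by deleting $uv$.
   Context: For a graph $G=(V,E)$ and a generic $p:V\to\mathbb{R}^d$ (coordinates algebraically independent over $\mathbb{Q}$), the rigidity matrix has a row for each $uv\in E$ with $p(u)-p(v)$ in the $d$ columns of $u$, $p(v)-p(u)$ in those of $v$, zeros elsewhere; $\mathcal{R}_d$ is its row matroid, with rank $r_d$. A graph is $\mathcal{R}_d$-connected if the restriction of $\mathcal{R}_d$ to its edge set is a connected matroid (every two edges lie in a common circuit). A set of edges is cyclic if it is a union of $\mathcal{R}_d$-circuits. $(V,D)$ is a $k$-fold $\mathcal{R}_d$-circuit if $D$ is cyclic and $r_d(D)=|D|-k$. Its principal partition is the partition $\{A_1,\dots,A_\ell\}$ of $D$ such that $\{D\setminus A_i\}$ is exactly the set of $(k-1)$-fold $\mathcal{R}_d$-circuits contained in $D$. A vertex is technicolour if it is incident with edges from at least two parts of the principal partition. The graphical parallel connection of graphs $H_1,\dots,H_m$ along the edge $uv$ is their union, where each $H_i$ contains the edge $uv$ and $H_i\cap H_j$ consists exactly of the vertices $u,v$ and the edge $uv$ for $i\neq j$. *)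

(* Defs.v *)
From HB Require Import structures.
From mathcomp Require Import all_boot all_order all_algebra.
From mathcomp Require Import mpoly.
Set Implicit Arguments. Unset Strict Implicit. Unset Printing Implicit Defensive.
Import Order.TTheory GRing.Theory Num.Theory.
Local Open Scope ring_scope.

(* Graphs on a finite vertex type V: an edge is a 2-element subset of V,
   an edge set is a {set {set V}}. *)
Section Rigidity.
Variables (R : realFieldType) (V : finType) (d : nat).

Definition coord_matrix (p : V -> 'rV[R]_d) : 'M[R]_(#|V|, d) :=
  \matrix_(i < #|V|, j < d) p (enum_val i) 0 j.

Definition coords (p : V -> 'rV[R]_d) : 'I_(#|V| * d) -> R :=
  fun i => mxvec (coord_matrix p) 0 i.

(* p is generic: its coordinates are algebraically independent over Q *)
Definition generic (p : V -> 'rV[R]_d) : Prop :=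
  forall q : {mpoly rat[#|V| * d]}, q != 0 -> mmap ratr (coords p) q != 0.

Definition is_edge (e : {set V}) : bool := #|e| == 2.
Definition edgeset (F : {set {set V}}) : bool := [forall e in F, is_edge e].

(* the row of the rigidity matrix for the edge e = ab (orientation chosen by
   [pick]; the sign does not affect the row matroid) *)
Definition rig_row (p : V -> 'rV[R]_d) (e : {set V}) : 'rV[R]_(#|V| * d) :=
  match [pick x in e] with
  | Some a =>
    match [pick y in e :\ a] with
    | Some b => mxvec (\matrix_(i < #|V|, j < d)
                  (if enum_val i == a then p a 0 j - p b 0 j
                   else if enum_val i == b then p b 0 j - p a 0 j else 0))
    | None => 0
    end
  | None => 0
  end.

Definition rank_d (p : V -> 'rV[R]_d) (F : {set {set V}}) : nat :=
  \rank (\sum_(e in F) <<rig_row p e>>)%MS.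

Definition dependent (p : V -> 'rV[R]_d) (F : {set {set V}}) : bool :=
  (rank_d p F < #|F|)%N.

Definition circuit (p : V -> 'rV[R]_d) (C : {set {set V}}) : Prop :=
  edgeset C /\ dependent p C /\ (forall F : {set {set V}}, F \proper C -> ~~ dependent p F).

Definition Rconnected (p : V -> 'rV[R]_d) (D : {set {set V}}) : Prop :=
  forall e f, e \in D -> f \in D ->
    exists C : {set {set V}}, [/\ C \subset D, circuit p C, e \in C & f \in C].

Definition cyclic (p : V -> 'rV[R]_d) (D : {set {set V}}) : Prop :=
  forall e, e \in D -> exists C : {set {set V}}, [/\ C \subset D, circuit p C & e \in C].

Definition kfold_circuit (p : V -> 'rV[R]_d) (k : nat) (D : {set {set V}}) : Prop :=
  [/\ edgeset D, cyclic p D & (rank_d p D + k)%N = #|D|].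

Definition principal_partition (p : V -> 'rV[R]_d) (k : nat)
    (D : {set {set V}}) (P : {set {set {set V}}}) : Prop :=
  partition P D /\
  (forall D' : {set {set V}}, D' \subset D ->
     (kfold_circuit p k.-1 D' <-> exists2 A, A \in P & D' = D :\: A)).

Definition technicolour (D : {set {set V}}) (P : {set {set {set V}}}) (x : V) : Prop :=
  exists (A B : {set {set V}}) (e f : {set V}), [/\ A \in P, B \in P, A != B &
                     [/\ e \in A, f \in B, x \in e & x \in f]].

Definition verts (F : {set {set V}}) : {set V} := \bigcup_(e in F) e.

Definition parallel_connection (m : nat) (H : 'I_m -> {set {set V}}) (u v : V) : Prop :=
  (forall i, [set u; v] \in H i) /\
  (forall i j, i != j ->
     H i :&: H j = [set [set u; v]] /\ verts (H i) :&: verts (H j) = [set u; v]).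

End Rigidity.

(* Main.v *)
From mathcomp Require Import ring zify.
Require Import Defs.
From HB Require Import structures.
From mathcomp Require Import all_boot all_order all_algebra.
From mathcomp Require Import mpoly.
Set Implicit Arguments. Unset Strict Implicit. Unset Printing Implicit Defensive.
Import Order.TTheory GRing.Theory Num.Theory.
Local Open Scope ring_scope.

Lemma dot_mxvec (R : comRingType) m n (A B : 'M[R]_(m, n)) :
  (mxvec A *m (mxvec B)^T) 0 0 = \sum_i \sum_j A i j * B i j.
Proof.
rewrite mxE (reindex _ (curry_mxvec_bij _ _)) pair_bigA /=.
by apply: eq_bigr => -[i j] _; rewrite /= mxE !mxvecE.
Qed.

Lemma sumV (R : comRingType) (V : finType) (F : V -> R) :
  \sum_(i < #|V|) F (enum_val i) = \sum_x F x.
Proof. by rewrite (reindex _ (onW_bij _ (enum_val_bij V))). Qed.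

Lemma sum_if (R : comRingType) (I : finType) (i0 : I) (F : I -> R) :
  \sum_i (if i == i0 then F i else 0) = F i0.
Proof. by rewrite -big_mkcond big_pred1_eq. Qed.

Section Geo.
Variables (R : realFieldType) (V : finType) (d : nat) (p : V -> 'rV[R]_d).

Local Notation S F := (\sum_(e in F) <<rig_row p e>>)%MS.

Definition rmat (a b : V) : 'M[R]_(#|V|, d) := \matrix_(i < #|V|, j < d)
  (if enum_val i == a then p a 0 j - p b 0 j
   else if enum_val i == b then p b 0 j - p a 0 j else 0).
Definition rowab a b := mxvec (rmat a b).

Lemma rig_row_edge (e : {set V}) : is_edge e ->
  exists a b, [/\ a != b, e = [set a; b] & rig_row p e = rowab a b].
Proof.
move=> /eqP e2; rewrite /rig_row.
case: pickP => [a ain|none]; last by move: e2; rewrite eq_card0.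
case: pickP => [b bin|none]; last first.
  by move: e2; rewrite (cardsD1 a) ain (eq_card0 none).
move: bin; rewrite in_setD1 => /andP[ba bin].
exists a, b; split => //; first by rewrite eq_sym.
apply/eqP; rewrite eq_sym eqEcard e2 cards2 eq_sym ba andbT.
by apply/subsetP => x; rewrite !inE => /orP[] /eqP ->.
Qed.

Definition Tm (T : V -> 'I_d -> R) : 'M[R]_(#|V|, d) :=
  \matrix_(i < #|V|, j < d) T (enum_val i) j.
Definition dotT (w : 'rV[R]_(#|V| * d)) T := (w *m (mxvec (Tm T))^T) 0 0.

Lemma dotT_mxvec A T :
  dotT (mxvec A) T = \sum_x \sum_j A (enum_rank x) j * T x j.
Proof.
rewrite /dotT dot_mxvec -[RHS]sumV; apply: eq_bigr => i _.
by apply: eq_bigr => j _; rewrite mxE enum_valK.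
Qed.

Lemma dotT_row a b T : a != b ->
  dotT (rowab a b) T = \sum_j (p a 0 j - p b 0 j) * (T a j - T b j).
Proof.
move=> ab; rewrite dotT_mxvec (bigD1 a) // (bigD1 b) 1?eq_sym //=.
rewrite [X in _ + (_ + X)]big1; last first.
  move=> x /andP[xa xb]; apply: big1 => j _.
  by rewrite mxE enum_rankK (negbTE xa) (negbTE xb) mul0r.
rewrite addr0 -big_split /=; apply: eq_bigr => j _.
rewrite !mxE !enum_rankK eqxx eq_sym (negbTE ab) eqxx.
by ring.
Qed.

Lemma dot_span (F : {set {set V}}) T w :
  (forall e, e \in F -> dotT (rig_row p e) T = 0) -> (w <= S F)%MS -> dotT w T = 0.
Proof.
move=> h wS.
have: (S F <= kermx (mxvec (Tm T))^T)%MS.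
  apply/sumsmx_subP => e eF; rewrite genmxE sub_kermx; apply/eqP/matrixP => i j.
  by rewrite !ord1 [RHS]mxE -(h e eF) /dotT mxE.
move=> /(submx_trans wS); rewrite sub_kermx => /eqP /matrixP /(_ 0 0).
by rewrite [RHS]mxE.
Qed.


Lemma sum_ifM (I : finType) (i0 : I) (F : I -> R) :
  \sum_i F i * (if i == i0 then 1 else 0) = F i0.
Proof.
rewrite -[RHS](sum_if i0 F); apply: eq_bigr => i _.
by case: eqP => _; rewrite ?mulr1 ?mulr0.
Qed.

Lemma sum_rot (f : 'I_d -> R) j k x y :
  \sum_i f i * ((if i == k then 1 else 0) * x - (if i == j then 1 else 0) * y)
  = f k * x - f j * y.
Proof.
under eq_bigr => i _ do rewrite mulrBr !mulrA.
by rewrite sumrB -!mulr_suml !sum_ifM.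
Qed.

Lemma edge_rows (E : {set {set V}}) e : edgeset E -> e \in E ->
  exists a b, [/\ a != b, e = [set a; b] & rig_row p e = rowab a b].
Proof. by move=> /forall_inP h /h /rig_row_edge. Qed.

Lemma vanish (E : {set {set V}}) x j w : edgeset E -> x \notin verts E ->
  (w <= S E)%MS -> vec_mx w (enum_rank x) j = 0.
Proof.
move=> eE xE wS.
pose T := fun y i => if (y == x) && (i == j) then 1 else 0 : R.
have := dot_span (T := T) _ wS.
rewrite -{1}(vec_mxK w) dotT_mxvec (bigD1 x) //= [X in _ + X]big1 ?addr0; last first.
  move=> y yx; apply: big1 => i _; by rewrite /T (negbTE yx) mulr0.
under eq_bigr => i _ do rewrite /T eqxx /=.
rewrite sum_ifM; apply => e eE'.
have [a [b [ab ee ->]]] := edge_rows eE eE'.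
have xe : x \notin [set a; b].
  by rewrite -ee; apply/negP => xe; move/negP: xE; apply; apply/bigcupP; exists e.
rewrite dotT_row //; apply: big1 => i _.
move: xe; rewrite !inE negb_or => /andP[xa xb].
by rewrite /T ![_ == x]eq_sym (negbTE xa) (negbTE xb) subrr mulr0.
Qed.

Lemma dot_uv (W : 'M[R]_(#|V|, d)) u v T : u != v ->
  (forall x j, x \notin [set u; v] -> W (enum_rank x) j = 0) ->
  dotT (mxvec W) T = \sum_i (W (enum_rank u) i * T u i + W (enum_rank v) i * T v i).
Proof.
move=> uv h0; rewrite dotT_mxvec (bigD1 u) // (bigD1 v) 1?eq_sym //=.
rewrite [X in _ + (_ + X)]big1 ?addr0 ?big_split //.
move=> x /andP[xu xv]; apply: big1 => i _.
by rewrite h0 ?mul0r // !inE negb_or xu xv.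
Qed.

Lemma geo_cap u v j0 (E1 E2 : {set {set V}}) (w : 'rV[R]_(#|V| * d)) : u != v -> p u 0 j0 != p v 0 j0 ->
  edgeset E1 -> edgeset E2 -> verts E1 :&: verts E2 \subset [set u; v] ->
  (w <= S E1)%MS -> (w <= S E2)%MS -> (w <= rowab u v)%MS.
Proof.
move=> uv pj0 eE1 eE2 sub wS1 wS2.
set W := vec_mx w; have wW : w = mxvec W by rewrite vec_mxK.
have h0 x j : x \notin [set u; v] -> W (enum_rank x) j = 0.
  move=> xuv; have [x1|x1] := boolP (x \in verts E1); last exact: vanish x1 wS1.
  have [x2|x2] := boolP (x \in verts E2); last exact: vanish x2 wS2.
  by move: xuv; rewrite (subsetP sub) // inE x1 x2.
have h2 j : W (enum_rank v) j = - W (enum_rank u) j.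
  pose T := fun (y : V) i => if i == j then 1 else 0 : R.
  have := dot_span (T := T) _ wS1; rewrite wW (dot_uv _ uv) // big_split /= !sum_ifM.
  move=> h; apply/eqP; rewrite -addr_eq0 addrC h // => e eE.
  have [a [b [ab -> ->]]] := edge_rows eE1 eE.
  by rewrite dotT_row //; apply: big1 => i _; rewrite /T subrr mulr0.
have h3 j k : W (enum_rank u) k * (p u 0 j - p v 0 j) =
              W (enum_rank u) j * (p u 0 k - p v 0 k).
  pose T := fun (y : V) i => (if i == k then 1 else 0) * p y 0 j
                            - (if i == j then 1 else 0) * p y 0 k : R.
  have := dot_span (T := T) _ wS1; rewrite wW (dot_uv _ uv) // big_split /= !sum_rot !h2.
  move=> h; apply/eqP; rewrite -subr_eq0; apply/eqP; rewrite -[RHS]h.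
    by ring.
  move=> e eE; have [a [b [ab -> ->]]] := edge_rows eE1 eE.
  rewrite dotT_row //.
  rewrite (eq_bigr (fun i => (p a 0 i - p b 0 i) *
     ((if i == k then 1 else 0) * (p a 0 j - p b 0 j)
      - (if i == j then 1 else 0) * (p a 0 k - p b 0 k)))); last first.
    by move=> i _; rewrite /T; ring.
  by rewrite sum_rot; ring.
pose c := W (enum_rank u) j0 / (p u 0 j0 - p v 0 j0).
have dj0 : p u 0 j0 - p v 0 j0 != 0 by rewrite subr_eq0.
have hc k : W (enum_rank u) k = c * (p u 0 k - p v 0 k).
  by rewrite /c mulrAC -(h3 j0 k) mulfK.
have eW : W = c *: rmat u v.
  apply/matrixP => i j.
  rewrite [in RHS]mxE [in RHS]mxE.
  have -> : W i j = W (enum_rank (enum_val i)) j by rewrite enum_valK.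
  case: eqP => [->|/eqP xu]; first by rewrite hc.
  case: eqP => [->|/eqP xv]; first by rewrite h2 hc; ring.
  by rewrite h0 ?mulr0 // !inE negb_or xu xv.
rewrite wW eW /rowab linearZ /=.
exact: scalemx_sub.
Qed.

End Geo.

Section Mat.
Variables (R : realFieldType) (V : finType) (d : nat) (p : V -> 'rV[R]_d).
Local Notation S F := (\sum_(e in F) <<rig_row p e>>)%MS.
Local Notation rk := (rank_d p).
Implicit Types F G T E K C : {set {set V}}.

Lemma S_le F m (B : 'M_(m, #|V| * d)) :
  (forall e, e \in F -> (rig_row p e <= B)%MS) -> (S F <= B)%MS.
Proof. by move=> h; apply/sumsmx_subP => e eF; rewrite genmxE h. Qed.

Lemma S_mem e F : e \in F -> (rig_row p e <= S F)%MS.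
Proof. by move=> eF; apply: (sumsmx_sup e) => //; rewrite genmxE. Qed.

Lemma S_sub F G : F \subset G -> (S F <= S G)%MS.
Proof. by move=> /subsetP h; apply: S_le => e /h; apply: S_mem. Qed.

Lemma rank_eq_sub m1 m2 n (A : 'M[R]_(m1, n)) (B : 'M[R]_(m2, n)) :
  (A <= B)%MS -> (B <= A)%MS -> \rank A = \rank B.
Proof. by move=> h1 h2; apply/eqP; rewrite eqn_leq !mxrankS. Qed.

Lemma S_U F G : \rank (S (F :|: G)) = \rank (S F + S G)%MS.
Proof.
apply: rank_eq_sub.
  apply: S_le => e; rewrite inE => /orP[] h.
    by apply: submx_trans (addsmxSl _ _); apply: S_mem.
  by apply: submx_trans (addsmxSr _ _); apply: S_mem.
by rewrite addsmx_sub !S_sub // ?subsetUl ?subsetUr.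
Qed.

Lemma rank_U F G : (rk (F :|: G) + \rank (S F :&: S G) = rk F + rk G)%N.
Proof. by rewrite /rank_d S_U mxrank_sum_cap. Qed.

Lemma rank_Ule F G : (rk (F :|: G) <= rk F + rk G)%N.
Proof. by rewrite -rank_U leq_addr. Qed.

Lemma rank_mono F G : F \subset G -> (rk F <= rk G)%N.
Proof. by move=> h; apply: mxrankS; apply: S_sub. Qed.

Lemma rank1 e : (rk [set e] <= 1)%N.
Proof.
rewrite /rank_d (big_pred1 e) ?mxrank_gen ?rank_leq_row // => x.
by rewrite !inE.
Qed.

Lemma rank_le_card F : (rk F <= #|F|)%N.
Proof.
elim: {F}#|F| {-2}F (erefl #|F|) => [|n IH] F Fn.
  by move/eqP: Fn; rewrite cards_eq0 => /eqP ->; rewrite /rank_d big_set0 mxrank0.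
have [x xF] : exists x, x \in F.
  by apply/set0Pn; rewrite -card_gt0 Fn.
have Fn' : #|F :\ x| = n by move: Fn; rewrite (cardsD1 x F) xF => -[].
rewrite -(setD1K xF); apply: leq_trans (rank_Ule _ _) _.
rewrite setD1K // Fn -add1n; apply: leq_add; first exact: rank1.
by apply: leq_trans (IH _ Fn') _; rewrite Fn'.
Qed.

Definition indep F := (#|F| <= rk F)%N.

Lemma indepE F : indep F = ~~ dependent p F.
Proof. by rewrite /indep /dependent -leqNgt. Qed.

Lemma indep_sub F G : G \subset F -> indep F -> indep G.
Proof.
move=> GF; rewrite /indep => h.
have e1 : F = G :|: (F :\: G).
  apply/setP => x; rewrite !inE; case: (boolP (x \in G)) => hx //=.
  by rewrite (subsetP GF).
have c1 : #|F| = (#|G| + #|F :\: G|)%N.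
  by rewrite -(cardsID G F) (setIidPr GF).
have := rank_le_card (F :\: G); have := rank_Ule G (F :\: G); rewrite -e1.
lia.
Qed.


Lemma edgeset_sub F G : F \subset G -> edgeset G -> edgeset F.
Proof.
by move=> /subsetP FG /forall_inP h; apply/forall_inP => e /FG /h.
Qed.

Lemma rank_span x F : (rig_row p x <= S F)%MS -> rk (x |: F) = rk F.
Proof.
move=> xF; apply: rank_eq_sub; last by apply: S_sub; apply: subsetUr.
apply: S_le => e; rewrite !inE => /orP[/eqP -> //|eF]; exact: S_mem.
Qed.

Lemma rank_nspan x F : ~~ (rig_row p x <= S F)%MS -> rk (x |: F) = (rk F).+1.
Proof.
move=> nx.
have le1 : (rk (x |: F) <= rk F + 1)%N.
  by apply: leq_trans (rank_Ule _ _) _; rewrite addnC leq_add2l; exact: rank1.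
have sF : (S F <= S (x |: F))%MS by apply: S_sub; apply: subsetUr.
have ne : rk F != rk (x |: F).
  rewrite /rank_d (mxrank_leqif_sup sF).2; apply: contra nx => h.
  apply: submx_trans h; apply: S_mem; exact: setU11.
have ge : (rk F <= rk (x |: F))%N by apply: mxrankS.
move: ne ge le1; lia.
Qed.

Definition circb C := [&& edgeset C, dependent p C &
  [forall F : {set {set V}}, (F \proper C) ==> ~~ dependent p F]].

Lemma circuitP C : reflect (circuit p C) (circb C).
Proof.
apply: (iffP and3P) => [[h1 h2 /forallP h3]|[h1 [h2 h3]]].
  by split => //; split => // F FC; have := h3 F; rewrite FC.
by split => //; apply/forallP => F; apply/implyP => /h3.
Qed.

Lemma dep_circuit T : edgeset T -> dependent p T ->
  exists C, C \subset T /\ circuit p C.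
Proof.
elim: {T}#|T|.+1 {-2}T (ltnSn #|T|) => // n IH T Tn eT dT.
case: (pickP [pred F : {set {set V}} | (F \proper T) && dependent p F]) =>
   [F /andP[FT dF] | none].
  have [||C [CF cC]] := IH F _ _ dF.
  - by have := proper_card FT; lia.
  - exact: edgeset_sub (proper_sub FT) eT.
  by exists C; split => //; apply: subset_trans CF (proper_sub FT).
exists T; split => //; split => //; split => // F FT; apply/negP => dF.
by have := none F; rewrite /= FT dF.
Qed.

Lemma circuit_span C x : circuit p C -> x \in C ->
  (rig_row p x <= S (C :\ x))%MS.
Proof.
move=> [eC [dC mC]] xC; apply/negPn/negP => nx.
have := rank_nspan nx; rewrite setD1K // => h.
have := mC _ (properD1 xC); rewrite -indepE /indep; move: dC.
rewrite /dependent h (cardsD1 x C) xC; lia.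
Qed.

Lemma dep_nonempty T : dependent p T -> exists y, y \in T.
Proof. by move=> dT; apply/card_gt0P; move: dT; rewrite /dependent; lia. Qed.

Lemma span_circuit E x : edgeset E -> x \in E ->
  (rig_row p x <= S (E :\ x))%MS ->
  exists C, [/\ C \subset E, circuit p C & x \in C].
Proof.
move=> eE xE.
suff: forall n T, (#|T| < n)%N -> T \subset E :\ x -> (rig_row p x <= S T)%MS ->
  exists C, [/\ C \subset E, circuit p C & x \in C].
  by move=> h; apply: (h _ (E :\ x) (ltnSn _)).
elim => // n IH T Tn TE xT.
case: (pickP [pred y | (y \in T) && (rig_row p x <= S (T :\ y))%MS]) =>
   [y /andP[yT xTy] | none].
  apply: (IH (T :\ y)) => //.
    by move: Tn; rewrite (cardsD1 y T) yT; lia.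
  by apply: subset_trans TE; apply: subsetDl.
have xnT : x \notin T by apply/negP => /(subsetP TE); rewrite !inE eqxx.
have TE' : T \subset E by apply: subset_trans TE (subsetDl _ _).
have eT : edgeset T := edgeset_sub TE' eE.
have indT : indep T.
  rewrite indepE; apply/negP => dT; have [C [CT [eC [dC mC]]]] := dep_circuit eT dT.
  have [y yC] := dep_nonempty dC.
  have yT := subsetP CT y yC.
  have : (rig_row p x <= S (T :\ y))%MS.
    apply: submx_trans xT _; apply: S_le => z zT.
    case: (eqVneq z y) => [->|zy]; last by apply: S_mem; rewrite !inE zy.
    apply: submx_trans (circuit_span (conj eC (conj dC mC)) yC) _ .
    by apply: S_sub; apply: setSD.
  by move=> h; have := none y; rewrite /= yT h.
exists (x |: T); split; last by rewrite setU11.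
  apply/subsetP => z; rewrite !inE => /orP[/eqP -> //|zT].
  exact: (subsetP TE').
split; first by apply/forall_inP => e; rewrite !inE => /orP[/eqP ->|/(subsetP TE') eEe];
  [exact: (forall_inP eE) | exact: (forall_inP eE)].
split.
  rewrite /dependent rank_span // cardsU1 xnT.
  by apply: leq_ltn_trans (rank_le_card _) _.
move=> F FT; rewrite -indepE.
case: (boolP (x \in F)) => xF; last first.
  apply: indep_sub indT; apply/subsetP => z zF.
  have := subsetP (proper_sub FT) z zF; rewrite !inE => /orP[/eqP zx|//].
  by move: xF; rewrite -zx zF.
have [_ [z zxT zF]] := properP FT.
have zT : z \in T.
  by move: zxT; rewrite !inE => /orP[/eqP zx|//]; move: zF; rewrite zx xF.
have FxT : F :\ x \subset T :\ z.
  apply/subsetP => t; rewrite !inE => /andP[tx tF].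
  have := subsetP (proper_sub FT) t tF; rewrite !inE (negbTE tx) /= => ->.
  by rewrite andbT; apply: contraNneq zF => <-.
have indF : indep (F :\ x).
  apply: indep_sub indT; apply: subset_trans FxT _; apply: subsetDl.
have nx : ~~ (rig_row p x <= S (F :\ x))%MS.
  apply/negP => h; have := none z; rewrite /= zT.
  by rewrite (submx_trans h (S_sub FxT)).
rewrite /indep -(setD1K xF) rank_nspan // cardsU1 !inE eqxx /=.
by move: indF; rewrite /indep.
Qed.

Lemma coloops E K : edgeset E -> K \subset E ->
  (forall x, x \in K -> ~ exists C, [/\ C \subset E, circuit p C & x \in C]) ->
  rk E = (rk (E :\: K) + #|K|)%N.
Proof.
elim: {K}#|K| {-2}K (erefl #|K|) E => [|n IH] K Kn E eE KE hK.
  by move/eqP: Kn; rewrite cards_eq0 => /eqP ->; rewrite setD0 cards0 addn0.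
have [x xK] : exists x, x \in K by apply/card_gt0P; rewrite Kn.
have xE := subsetP KE x xK.
have Kn' : #|K :\ x| = n by move: Kn; rewrite (cardsD1 x K) xK => -[].
have nx : ~~ (rig_row p x <= S (E :\ x))%MS.
  by apply/negP => /(span_circuit eE xE) /(hK x xK).
rewrite -{1}(setD1K xE) rank_nspan // (IH (K :\ x)) //.
- have -> : E :\ x :\: (K :\ x) = E :\: K.
    apply/setP => z; rewrite !inE; case: (eqVneq z x) => [->|]; by rewrite ?xK ?andbF.
  by rewrite Kn Kn' addnS.
- exact: edgeset_sub (subsetDl _ _) eE.
- exact: setSD.
move=> y /setD1P[yx yK] [C [CE cC yC]]; apply: (hK y yK); exists C; split => //.
by apply: subset_trans CE (subsetDl _ _).
Qed.

End Mat.

Section G.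
Variables (R : realFieldType) (V : finType) (d : nat) (p : V -> 'rV[R]_d).

Lemma generic_inj (gp : generic p) (a b : V) (j : 'I_d) : a != b -> p a 0 j != p b 0 j.
Proof.
move=> ab.
pose i1 := mxvec_index (enum_rank a) j.
pose i2 := mxvec_index (enum_rank b) j.
have ne : i1 != i2.
  apply/eqP=> /(congr1 (fun k => enum_val (cast_ord (esym (mxvec_cast _ _)) k))).
  rewrite /i1 /i2 /mxvec_index !cast_ordK !enum_rankK => -[] /(congr1 enum_val).
  by rewrite !enum_rankK; apply/eqP.
have q0 : ('X_i1 - 'X_i2 : {mpoly rat[#|V| * d]}) != 0.
  apply/eqP=> /(congr1 (mcoeff U_(i1))); rewrite mcoeffB !mcoeffXU eqxx.
  rewrite eq_sym (negbTE ne) subr0.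
  by rewrite mcoeff0 => /eqP; rewrite oner_eq0.
have := gp _ q0; rewrite mmapB /= !mmapX !mmap1U /coords !mxvecE !mxE !enum_rankK.
by rewrite subr_eq0.
Qed.
End G.

Lemma arith1 a b c x y n : (c + n.+1 = y + 1 -> x <= b -> b <= x ->
  a + 1 = b + c -> a + n.+2 = x + y + 1)%N.
Proof. lia. Qed.

Lemma arith2 r c D' Pc : (r + c = D' -> r + Pc = D' + 1 -> Pc = c.+1)%N.
Proof. lia. Qed.

Section Main.
Variables (R : realFieldType) (V : finType) (d k : nat) (p : V -> 'rV[R]_d)
  (D : {set {set V}}) (P : {set {set {set V}}}) (u v : V).
Hypotheses (hd : (1 <= d)%N) (hk : (2 <= k)%N) (gp : generic p)
  (hcon : Rconnected p D) (hkf : kfold_circuit p k D)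
  (hpp : principal_partition p k D P) (uv : u != v)
  (htech : forall x, technicolour D P x <-> x \in [set u; v]).

Local Notation S F := (\sum_(e in F%SET) <<rig_row p e>>)%MS.
Local Notation rk := (rank_d p).
Local Notation e0 := [set u; v].
Local Notation r0 := (rig_row p [set u; v]).
Implicit Types F G T E K C A B X Y W : {set {set V}}.

Let j0 : 'I_d := Ordinal hd.
Let pj0 : p u 0 j0 != p v 0 j0 := generic_inj gp j0 uv.

Lemma e0_edge : is_edge e0.
Proof. by rewrite /is_edge cards2 uv. Qed.

Lemma rowab_neq0 : rowab p u v != 0.
Proof.
apply/negP => /eqP /rowP /(_ (mxvec_index (enum_rank u) j0)).
rewrite mxvecE !mxE enum_rankK eqxx => /eqP; rewrite subr_eq0 (negbTE pj0).
by [].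
Qed.

Lemma rowab_swap : rowab p v u = rowab p u v.
Proof.
rewrite /rowab; congr mxvec; apply/matrixP => i j; rewrite !mxE.
have vu : (v == u) = false by rewrite eq_sym (negbTE uv).
case: eqP => [->|xv]; first by rewrite vu.
by case: eqP.
Qed.

Lemma r0_eq : r0 = rowab p u v.
Proof.
have [a [b [ab ee ->]]] := rig_row_edge p e0_edge.
have aE : a \in e0 by rewrite ee !inE eqxx.
have bE : b \in e0 by rewrite ee !inE eqxx orbT.
move: aE bE ab; rewrite !inE => /orP[]/eqP-> /orP[]/eqP->; rewrite ?eqxx //= => _.
exact: rowab_swap.
Qed.

Lemma r0_sub : (rowab p u v <= r0)%MS.
Proof. by rewrite r0_eq submx_refl. Qed.

Lemma r0_neq0 : r0 != 0.
Proof. by rewrite r0_eq rowab_neq0. Qed.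

Lemma cap_r0 E1 E2 : edgeset E1 -> edgeset E2 -> verts E1 :&: verts E2 \subset e0 ->
  (S E1 :&: S E2 <= r0)%MS.
Proof.
move=> h1 h2 h; apply/row_subP => i; apply: submx_trans r0_sub.
apply: (geo_cap uv pj0 h1 h2 h).
  exact: submx_trans (row_sub _ _) (capmxSl _ _).
exact: submx_trans (row_sub _ _) (capmxSr _ _).
Qed.

Lemma glue2 E1 E2 : edgeset E1 -> edgeset E2 -> verts E1 :&: verts E2 \subset e0 ->
  (r0 <= S E1)%MS -> (r0 <= S E2)%MS -> (rk (E1 :|: E2) + 1 = rk E1 + rk E2)%N.
Proof.
move=> h1 h2 h s1 s2; rewrite -rank_U; congr (_ + _)%N.
have c := cap_r0 h1 h2 h.
have c' : (r0 <= S E1 :&: S E2)%MS by rewrite sub_capmx s1 s2.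
by rewrite (rank_eq_sub c c') rank_rV r0_neq0.
Qed.

Lemma glue0 E1 E2 : edgeset E1 -> edgeset E2 -> verts E1 :&: verts E2 \subset e0 ->
  ~~ (r0 <= S E1)%MS -> rk (E1 :|: E2) = (rk E1 + rk E2)%N.
Proof.
move=> h1 h2 h n1; rewrite -rank_U.
have c := cap_r0 h1 h2 h.
have le1 : (\rank (S E1 :&: S E2) <= 1)%N.
  by apply: leq_trans (mxrankS c) _; rewrite rank_leq_row.
suff : \rank (S E1 :&: S E2) != 1%N by move: le1; lia.
apply: contra n1 => /eqP r1.
have : \rank (S E1 :&: S E2) == \rank r0 by rewrite r1 rank_rV r0_neq0.
rewrite (mxrank_leqif_sup c).2 => c'.
exact: submx_trans c' (capmxSl _ _).
Qed.

Lemma hD : edgeset D. Proof. by case: hkf. Qed.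
Lemma cycD : cyclic p D. Proof. by case: hkf. Qed.
Lemma rkD : (rk D + k)%N = #|D|. Proof. by case: hkf. Qed.
Lemma partP : partition P D. Proof. by case: hpp. Qed.
Lemma coverP : cover P = D. Proof. by case/and3P: partP => /eqP. Qed.
Lemma trivP : trivIset P. Proof. by case/and3P: partP. Qed.
Lemma set0P : set0 \notin P. Proof. by case/and3P: partP. Qed.

Lemma part_sub A : A \in P -> A \subset D.
Proof. by move=> AP; rewrite -coverP; apply: bigcup_sup. Qed.

Lemma part_edge A : A \in P -> edgeset A.
Proof. by move=> /part_sub /edgeset_sub; apply; exact: hD. Qed.

Lemma part_uniq A B f : A \in P -> B \in P -> f \in A -> f \in B -> A = B.
Proof.
by move=> AP BP fA fB; rewrite -(def_pblock trivP AP fA) (def_pblock trivP BP fB).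
Qed.

Lemma part_ne A : A \in P -> exists e, e \in A.
Proof.
move=> AP; apply/set0Pn; apply: contraNneq set0P => <-; exact: AP.
Qed.

Lemma part_of f : f \in D -> exists2 B, B \in P & f \in B.
Proof.
move=> fD; exists (pblock P f); first by apply: pblock_mem; rewrite coverP.
by rewrite mem_pblock coverP.
Qed.

Lemma part_compl A : A \in P -> exists f, f \in D :\: A.
Proof.
move=> AP; apply/set0Pn/negP => /eqP h.
have [_ _ h2] : kfold_circuit p k.-1 (D :\: A).
  by apply: (proj2 (hpp.2 (D :\: A) (subsetDl D A))); exists A.
move: h2; rewrite h cards0; lia.
Qed.

Lemma part_disj A B g : A \in P -> B \in P -> A != B -> g \in B -> g \in D :\: A.
Proof.
move=> AP BP AB gB; rewrite inE (subsetP (part_sub BP)) // andbT.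
by apply: contra AB => gA; rewrite (part_uniq AP BP gA gB).
Qed.

Lemma tech_sep A X Y : A \in P -> X \subset A -> Y \subset D :\: A ->
  verts X :&: verts Y \subset e0.
Proof.
move=> AP XA YD; apply/subsetP => x; rewrite inE.
move=> /andP[/bigcupP[e eX xe] /bigcupP[f fY xf]].
have /setDP[fD fA] := subsetP YD f fY.
have [B BP fB] := part_of fD.
apply/htech; exists A, B, e, f; split => //.
  by apply: contraNneq fA => ->.
by split => //; apply: (subsetP XA).
Qed.

Lemma factZ f : f \in D -> exists2 A, A \in P & f \in A /\
  forall g, g \in A -> g != f -> ~~ (rig_row p g <= S (D :\ f :\ g))%MS.
Proof.
move=> fD.
pose E := D :\ f.
pose K := [set x in E | ~~ [exists C : {set {set V}}, [&& C \subset E, circb p C & x \in C]]].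
pose W := E :\: K.
have eE : edgeset E by apply: edgeset_sub (subsetDl _ _) hD.
have KE : K \subset E by apply/subsetP => x; rewrite inE => /andP[].
have hK x : x \in K -> ~ exists C, [/\ C \subset E, circuit p C & x \in C].
  rewrite inE => /andP[_ /existsPn h] [C [CE /circuitP cC xC]].
  by have := h C; rewrite CE cC xC.
have rkE := coloops eE KE hK.
have rkE' : rk E = rk D.
  have [C [CD cC fC]] := cycD fD.
  have fs : (rig_row p f <= S E)%MS.
    apply: submx_trans (circuit_span cC fC) _; apply: S_sub; exact: setSD.
  by rewrite -(rank_span fs) setD1K.
have cE : #|D| = #|E|.+1 by rewrite (cardsD1 f D) fD.
have cW : #|W| = (#|E| - #|K|)%N by rewrite cardsDS.
have cK : (#|K| <= #|E|)%N by apply: subset_leq_card.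
have WD : W \subset D by apply: subset_trans (subsetDl _ _) (subsetDl _ _).
have kW : kfold_circuit p k.-1 W.
  split.
  - exact: edgeset_sub WD hD.
  - move=> x; rewrite inE => /andP[xK xE].
    move: xK; rewrite inE xE negbK => /existsP[C /and3P[CE /circuitP cC xC]].
    exists C; split => //; apply/subsetP => y yC; rewrite inE (subsetP CE) // andbT.
    by rewrite inE negb_and negbK; apply/orP; right; apply/existsP; exists C;
      rewrite CE yC andbT /=; apply/circuitP.
  - have := rkD; rewrite -rkE' rkE cW cE /W; move: cK hk; lia.
have [A AP WA] := (hpp.2 W WD).1 kW.
have fA : f \in A.
  apply/negPn/negP => nfA.
  have : f \in W by rewrite WA inE nfA.
  by rewrite !inE eqxx.
exists A => //; split => // g gA gf; apply/negP => sg.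
have gE : g \in E by rewrite !inE gf (subsetP (part_sub AP)).
have gK : g \in K.
  apply/negPn/negP => gnK.
  have : g \in W by rewrite inE gnK.
  by rewrite WA inE gA.
exact: hK gK (span_circuit eE gE sg).
Qed.

Lemma spanA A : A \in P -> e0 \notin A -> (r0 <= S A)%MS.
Proof.
move=> AP e0A; apply/idPn => nA.
have [e eA] := part_ne AP.
have [f fDA] := part_compl AP.
have eD := subsetP (part_sub AP) e eA.
have /setDP[fD fA] := fDA.
have [C [CD [eC [dC mC]] eC' fC]] := hcon eD fD.
have sep : verts (C :&: A) :&: verts (C :\: A) \subset e0.
  by apply: tech_sep AP (subsetIr _ _) (setSD _ CD).
have n1 : ~~ (r0 <= S (C :&: A))%MS.
  by apply: contra nA => h; apply: submx_trans h _; apply: S_sub; apply: subsetIr.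
have e1 : edgeset (C :&: A) by apply: edgeset_sub eC; apply: subsetIl.
have e2 : edgeset (C :\: A) by apply: edgeset_sub eC; apply: subsetDl.
have := glue0 e1 e2 sep n1; rewrite setID => rC.
have i1 : indep p (C :&: A).
  rewrite indepE; apply: mC; rewrite properEneq subsetIl andbT.
  apply/eqP => h; have : f \in C :&: A by rewrite h.
  by rewrite inE (negbTE fA) andbF.
have i2 : indep p (C :\: A).
  rewrite indepE; apply: mC; rewrite properEneq subsetDl andbT.
  apply/eqP => h; have : e \in C :\: A by rewrite h.
  by rewrite inE eA.
have cC := cardsID A C.
move: dC i1 i2 cC; rewrite /dependent /indep rC => h1 h2 h3 h4.
by move: h1; rewrite -h4 ltnNge leq_add.
Qed.

Lemma spanY A : A \in P -> (r0 <= S (D :\: A))%MS.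
Proof.
move=> AP; have [f /setDP[fD fA]] := part_compl AP.
have [B BP fB] := part_of fD.
have AB : A != B by apply: contraNneq fA => ->.
have BDA : B \subset D :\: A by apply/subsetP => g; apply: part_disj.
have h := S_sub p BDA. apply: submx_trans h.
case: (boolP (e0 \in B)) => h; first exact: S_mem.
exact: spanA.
Qed.

Lemma partA0 A : A \in P -> e0 \in A -> A = [set e0].
Proof.
move=> AP e0A; apply/setP => g; rewrite inE; apply/idP/eqP => [gA|->//].
apply/eqP/negPn/negP => ge.
have gD := subsetP (part_sub AP) g gA.
have [B BP [gB hB]] := factZ gD.
have AB := part_uniq AP BP gA gB; subst B.
have := hB _ e0A; rewrite eq_sym ge => /(_ isT) /negP; apply.
apply: submx_trans (spanY AP) _; apply: S_sub; apply/subsetP => z.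
rewrite !inE => /andP[zA zD]; rewrite zD andbT.
by apply/andP; split; apply: contraNneq zA => ->.
Qed.

Lemma edge_e0 F : edgeset F -> edgeset (e0 |: F).
Proof.
move=> eF; apply/forall_inP => e; rewrite !inE => /orP[/eqP ->|eF'].
  exact: e0_edge.
exact: (forall_inP eF).
Qed.

Lemma indep_e0 : indep p [set e0].
Proof.
by rewrite /indep /rank_d big_set1 mxrank_gen rank_rV r0_neq0 cards1.
Qed.

Lemma indepA A : A \in P -> e0 \notin A -> indep p A /\ circuit p (e0 |: A).
Proof.
move=> AP e0A.
have eA := part_edge AP.
have sA := spanA AP e0A.
have I1 f : f \in A -> indep p (e0 |: (A :\ f)).
  move=> fA; rewrite indepE; apply/negP => dT.
  have eT : edgeset (e0 |: (A :\ f)).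
    by apply: edge_e0; apply: edgeset_sub eA; apply: subsetDl.
  have [C [CT cC]] := dep_circuit eT dT.
  have [t tC te] : exists2 t, t \in C & t != e0.
    have : ~~ (C \subset [set e0]).
      apply/negP => /indep_sub /(_ indep_e0); rewrite indepE.
      by case: cC => _ [-> _].
    by case/subsetPn => t tC; rewrite inE => te; exists t.
  have := subsetP CT t tC; rewrite !inE (negbTE te) /= => /andP[tf tA].
  have fD := subsetP (part_sub AP) f fA.
  have [B BP [fB hB]] := factZ fD.
  have AB := part_uniq AP BP fA fB; subst B.
  have := hB t tA tf; apply/negP/negPn.
  apply: submx_trans (circuit_span cC tC) _; apply: S_le => z.
  rewrite !inE => /andP[zt zC]; have := subsetP CT z zC.
  rewrite !inE => /orP[/eqP ->|/andP[zf zA]].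
    apply: submx_trans (spanY AP) _; apply: S_sub; apply/subsetP => y.
    rewrite !inE => /andP[yA ->]; rewrite andbT.
    by apply/andP; split; apply: contraNneq yA => ->.
  by apply: S_mem; rewrite !inE zt zf (subsetP (part_sub AP)).
have I2 : indep p A.
  have [f fA] := part_ne AP.
  have := I1 f fA; rewrite /indep cardsU1.
  have -> : (e0 \in A :\ f) = false by rewrite inE (negbTE e0A) andbF.
  rewrite [#|A|](cardsD1 f A) fA /= => h; apply: leq_trans h _.
  apply: mxrankS; apply: S_le => z; rewrite !inE => /orP[/eqP -> //|/andP[_ zA]].
  exact: S_mem.
split => //.
split; first exact: edge_e0.
split.
  rewrite /dependent rank_span // cardsU1 e0A.
  by apply: leq_ltn_trans (rank_le_card _ _) _.
move=> F FA; rewrite -indepE.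
case: (boolP (e0 \in F)) => eF; last first.
  apply: indep_sub I2; apply/subsetP => z zF.
  have := subsetP (proper_sub FA) z zF; rewrite !inE => /orP[/eqP zx|//].
  by move: eF; rewrite -zx zF.
have [_ [z zxT zF]] := properP FA.
have zA : z \in A.
  by move: zxT; rewrite !inE => /orP[/eqP zx|//]; move: zF; rewrite zx eF.
apply: indep_sub (I1 z zA); apply/subsetP => t tF.
have := subsetP (proper_sub FA) t tF; rewrite !inE => /orP[->//|tA].
by rewrite tA andbT orbC; apply/orP; left; apply: contraNneq zF => <-.
Qed.

Lemma partsP A : A \in P -> indep p A /\ (r0 <= S A)%MS.
Proof.
move=> AP; case: (boolP (e0 \in A)) => h.
  by rewrite (partA0 AP h); split; [exact: indep_e0 | apply: S_mem; rewrite inE].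
by split; [case: (indepA AP h) | exact: spanA].
Qed.

Lemma count_parts (Q : {set {set {set V}}}) : Q \subset P -> Q != set0 ->
  (rk (cover Q) + #|Q| = #|cover Q| + 1)%N.
Proof.
elim: {Q}#|Q| {-2}Q (erefl #|Q|) => [|n IH] Q Qn QP Q0.
  by move: Q0; rewrite -card_gt0 Qn.
have [A AQ] : exists A, A \in Q by apply/card_gt0P; rewrite Qn.
have AP := subsetP QP A AQ.
have [iA sA] := partsP AP.
case: n IH Qn => [|n] IH Qn.
  have QA : Q = [set A].
    apply/eqP; rewrite eq_sym eqEcard sub1set AQ cards1 Qn //.
  rewrite QA /cover big_set1 cards1.
  by apply/eqP; rewrite eqn_add2r eqn_leq rank_le_card.
have Qn' : #|Q :\ A| = n.+1 by move: Qn; rewrite (cardsD1 A Q) AQ => -[].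
have Q'P : Q :\ A \subset P by apply: subset_trans QP; apply: subsetDl.
have Q'0 : Q :\ A != set0 by rewrite -card_gt0 Qn'.
have IH' := IH _ Qn' Q'P Q'0.
have cQ : cover Q = A :|: cover (Q :\ A) by rewrite /cover (big_setD1 A AQ).
have CD : cover (Q :\ A) \subset D :\: A.
  apply/subsetP => g /bigcupP[B /setD1P[BA BQ] gB].
  by apply: part_disj AP (subsetP QP B BQ) _ gB; rewrite eq_sym.
have [B BQ'] : exists B, B \in Q :\ A by apply/card_gt0P; rewrite Qn'.
have sC : (r0 <= S (cover (Q :\ A)))%MS.
  have [_ sB] := partsP (subsetP Q'P B BQ').
  by apply: submx_trans sB _; apply: S_sub; apply: bigcup_sup.
have eC : edgeset (cover (Q :\ A)).
  apply: edgeset_sub hD; apply: subset_trans CD (subsetDl _ _).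
have := glue2 (part_edge AP) eC (tech_sep AP (subxx _) CD) sA sC.
have disj : #|A :|: cover (Q :\ A)| = (#|A| + #|cover (Q :\ A)|)%N.
  rewrite cardsU; suff -> : A :&: cover (Q :\ A) = set0 by rewrite cards0 subn0.
  apply/setP => g; rewrite !inE; apply/andP => -[gA /(subsetP CD)].
  by rewrite inE gA.
have rA := rank_le_card p A.
rewrite cQ disj Qn; move: IH' iA rA; rewrite /indep Qn'.
move: (rk (A :|: cover (Q :\ A))) (rk A) (rk (cover (Q :\ A))) #|A| #|cover (Q :\ A)|.
move=> a b c x y; exact: arith1.
Qed.


Lemma verts_U1 x F : verts (x |: F) = x :|: verts F.
Proof.
apply/setP => z; rewrite in_setU; apply/bigcupP/orP.
  move=> [e]; rewrite in_setU in_set1 => /orP[/eqP ->|eF] ze; first by left.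
  by right; apply/bigcupP; exists e.
case=> [zx|/bigcupP[e eF ze]]; first by exists x; rewrite ?setU11.
by exists e; rewrite // in_setU eF orbT.
Qed.

Lemma build (Q : {set {set {set V}}}) m (hm : m = #|Q|) : (0 < m)%N ->
  Q \subset P -> (forall A, A \in Q -> e0 \notin A) ->
  (forall z, z \in D -> z = e0 \/ exists2 A, A \in Q & z \in A) ->
  exists H : 'I_m -> {set {set V}},
    [/\ forall i, circuit p (H i), parallel_connection H u v,
        \bigcup_i H i = e0 |: cover Q & verts D = \bigcup_i verts (H i)].
Proof.
move=> m0 QP Qe Dcov.
pose Ai (i : 'I_m) : {set {set V}} := @enum_val _ (mem Q) (cast_ord hm i).
have hQ i : Ai i \in Q by apply: enum_valP.
have hP i : Ai i \in P := subsetP QP _ (hQ i).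
have inj i j : Ai i = Ai j -> i = j.
  by move/enum_val_inj/cast_ord_inj.
have surj A : A \in Q -> exists i, Ai i = A.
  move=> AQ; exists (cast_ord (esym hm) (enum_rank_in AQ A)).
  by rewrite /Ai cast_ordKV enum_rankK_in.
pose H i := e0 |: Ai i.
have i0 : 'I_m := Ordinal m0.
have inH z : (exists i, z \in H i) <-> z = e0 \/ exists2 A, A \in Q & z \in A.
  split.
    move=> [i]; rewrite in_setU in_set1 => /orP[/eqP ->|zA]; first by left.
    by right; exists (Ai i).
  case=> [->|[A AQ zA]]; first by exists i0; rewrite setU11.
  by have [i iA] := surj A AQ; exists i; rewrite /H in_setU iA zA orbT.
exists H; split.
- by move=> i; case: (indepA (hP i) (Qe _ (hQ i))).
- split; first by move=> i; rewrite setU11.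
  move=> i j ij; have nA : Ai i != Ai j by apply: contra ij => /eqP /inj ->.
  split.
    apply/setP => z; rewrite in_setI !in_setU in_set1.
    case: eqP => //= _; apply/negP => /andP[zi zj].
    by move: nA; rewrite (part_uniq (hP i) (hP j) zi zj) eqxx.
  rewrite !verts_U1; apply/setP => z; rewrite in_setI (in_setU z e0) (in_setU z e0).
  case: (boolP (z \in e0)) => //= ze; apply/negP => /andP[zi zj].
  have sub : Ai j \subset D :\: Ai i.
    by apply/subsetP => g; apply: part_disj (hP i) (hP j) nA.
  have := subsetP (tech_sep (hP i) (subxx _) sub) z.
  by rewrite in_setI zi zj (negbTE ze) => /(_ isT).
- apply/setP => z; rewrite in_setU in_set1; apply/bigcupP/orP.
    move=> [i _ zi]; have [] := (inH z).1 (ex_intro _ i zi); first by move=> ->; left.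
    by move=> [A AQ zA]; right; apply/bigcupP; exists A.
  move=> h; have [i zi] : exists i, z \in H i.
    apply/(inH z); case: h => [/eqP ->|/bigcupP[A AQ zA]]; first by left.
    by right; exists A.
  by exists i.
- apply/setP => z; apply/bigcupP/bigcupP.
    move=> [e eD ze]; have [i ei] := (inH e).2 (Dcov e eD).
    by exists i => //; apply/bigcupP; exists e.
  move=> [i _]; rewrite verts_U1 in_setU => /orP[ze|/bigcupP[e eA ze]].
    have [A [B [e [f [AP _ _ [eA _ ze2 _]]]]]] := (htech z).2 ze.
    by exists e => //; apply: (subsetP (part_sub AP)).
  by exists e => //; apply: (subsetP (part_sub (hP i))).
Qed.


Lemma count_all : #|P| = k.+1.
Proof.
have [A [B [e [f [AP _ _ _]]]]] := (htech u).2 (setU11 _ _).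
have P0 : P != set0 by apply/set0Pn; exists A.
have := count_parts (subxx P) P0; rewrite coverP; have := rkD.
exact: arith2.
Qed.

Lemma cover_sub (Q : {set {set {set V}}}) : Q \subset P -> cover Q \subset D.
Proof.
move=> QP; apply/subsetP => z /bigcupP[A AQ zA].
exact: (subsetP (part_sub (subsetP QP A AQ))).
Qed.

Lemma main_i : e0 \in D ->
  exists H : 'I_k -> {set {set V}},
    [/\ forall i, circuit p (H i), parallel_connection H u v,
        D = \bigcup_i H i & verts D = \bigcup_i verts (H i)].
Proof.
move=> e0D; have [A0 A0P e0A0] := part_of e0D.
have A0E := partA0 A0P e0A0.
pose Q := P :\ A0.
have hQ : k = #|Q|.
  by have := count_all; rewrite (cardsD1 A0 P) A0P => -[].
have QP : Q \subset P by apply: subsetDl.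
have Qe A : A \in Q -> e0 \notin A.
  move=> /setD1P[AA0 AP]; apply: contra AA0 => eA.
  by rewrite (part_uniq AP A0P eA e0A0).
have Dcov z : z \in D -> z = e0 \/ exists2 A, A \in Q & z \in A.
  move=> zD; have [B BP zB] := part_of zD.
  case: (eqVneq B A0) => [BA0|BA0].
    by left; move: zB; rewrite BA0 A0E inE => /eqP.
  by right; exists B => //; rewrite /Q in_setD1 BA0 BP.
have [|H [hc hpc hU hV]] := build hQ _ QP Qe Dcov; first by move: hk; case: (k).
exists H; split => //; rewrite hU.
apply/setP => z; rewrite in_setU in_set1; apply/idP/orP.
  move=> zD; case: (Dcov z zD) => [->|[A AQ zA]]; first by left.
  by right; apply/bigcupP; exists A.
case=> [/eqP -> //|]; exact: (subsetP (cover_sub QP)).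
Qed.

Lemma main_ii : e0 \notin D ->
  exists H : 'I_k.+1 -> {set {set V}},
    [/\ forall i, circuit p (H i), parallel_connection H u v,
        D = (\bigcup_i H i) :\ e0 & verts D = \bigcup_i verts (H i)].
Proof.
move=> e0D.
have hQ : k.+1 = #|P| by rewrite count_all.
have Qe A : A \in P -> e0 \notin A.
  by move=> AP; apply: contra e0D; apply: (subsetP (part_sub AP)).
have Dcov z : z \in D -> z = e0 \/ exists2 A, A \in P & z \in A.
  by move=> zD; right; apply: part_of.
have [|H [hc hpc hU hV]] := build hQ _ (subxx P) Qe Dcov; first by [].
exists H; split => //; rewrite hU coverP.
apply/setP => z; rewrite in_setD1 in_setU in_set1.
case: eqP => [->|_] /=; first by rewrite (negbTE e0D).
by [].
Qed.

End Main.

Theorem proposition3p11 (R : realFieldType) (V : finType) (d k : nat)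
  (p : V -> 'rV[R]_d) (D : {set {set V}}) (P : {set {set {set V}}}) (u v : V) :
  (1 <= d)%N -> (2 <= k)%N -> generic p ->
  Rconnected p D -> kfold_circuit p k D -> principal_partition p k D P ->
  u != v ->
  (forall x, technicolour D P x <-> x \in [set u; v]) ->
  ([set u; v] \in D ->
     exists H : 'I_k -> {set {set V}},
       [/\ forall i, circuit p (H i), parallel_connection H u v,
           D = \bigcup_i H i & verts D = \bigcup_i verts (H i)]) /\
  ([set u; v] \notin D ->
     exists H : 'I_k.+1 -> {set {set V}},
       [/\ forall i, circuit p (H i), parallel_connection H u v,
           D = (\bigcup_i H i) :\ [set u; v]
         & verts D = \bigcup_i verts (H i)]).
Proof.
move=> hd hk gp hcon hkf hpp uv htech; split.
  exact: (main_i hd hk gp hcon hkf hpp uv htech).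
exact: (main_ii hd hk gp hcon hkf hpp uv htech).
Qed.
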